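(* Let $X$ be a $T_1$ topological space and regard $X\subseteq\beta_\circ^F X$ via $x\mapsto\mathcal{U}_x=\{Z\in Z[C_c(X)_F]: x\in Z\}$. Then every maximal ideal $M$ of $C_c(X)_F$ is of the form $M^p=\{f\in C_c(X)_F: p\in \mathrm{Cl}_{\beta_\circ^F X}Z(f)\}$ for some $p\in\beta_\circ^F X$ (namely $p=Z[M]$).
   Context: $C_c(X)_F$ denotes the set of all functions $f:X\to\mathbb{R}$ whose range is countable and whose set of points of discontinuity is finite. $Z(f)=\{x:f(x)=0\}$, $Z[M]=\{Z(f):f\in M\}$, $Z[C_c(X)_F]=\{Z(f):f\in C_c(X)_F\}$. A $(\mathcal{Z}_c)_F$-filter on $X$ is a nonempty family $\mathcal{F}\subseteq Z[C_c(X)_F]$ with $\emptyset\notin\mathcal{F}$, closed under finite intersections and upward closed within $Z[C_c(X)_F]$; a $(\mathcal{Z}_c)_F$-ultrafilter is a maximal one. $\beta_\circ^F X$ is the set of all $(\mathcal{Z}_c)_F$-ultrafilters on $X$ with the topology having as base for closed sets the sets $\overline{Z}=\{\mathcal{U}: Z\in\mathcal{U}\}$, $Z\in Z[C_c(X)_F]$. For $Z\subseteq X$ (identified with a subset of $\beta_\circ^F X$), $\mathrm{Cl}_{\beta_\circ^F X}Z$ is its closure there. *)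

(* Defs.v *)
From HB Require Import structures.
From mathcomp Require Import all_boot all_order all_algebra.
From mathcomp Require Import all_classical all_reals all_analysis.
Set Implicit Arguments. Unset Strict Implicit. Unset Printing Implicit Defensive.
Import Order.TTheory GRing.Theory Num.Theory.
Import numFieldNormedType.Exports.
Local Open Scope classical_set_scope.
Local Open Scope ring_scope.

Section CcF.
Variables (X : topologicalType) (R : realType).

Definition CcF (f : X -> R) : Prop :=
  countable (range f) /\ finite_set [set x : X | ~ {for x, continuous f}].

Definition Zset (f : X -> R) : set X := [set x | f x = 0].

Definition ZCcF : set (set X) := [set Z | exists f, CcF f /\ Z = Zset f].

Definition ZcF_filter (F : set (set X)) : Prop :=
  [/\ F !=set0, F `<=` ZCcF, ~ F set0,
      (forall A B, F A -> F B -> F (A `&` B)) &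
      (forall A B, F A -> ZCcF B -> A `<=` B -> F B)].

Definition ZcF_ultrafilter (F : set (set X)) : Prop :=
  ZcF_filter F /\ (forall G, ZcF_filter G -> F `<=` G -> G = F).

Definition betaF : set (set (set X)) := [set U | ZcF_ultrafilter U].

Definition basic_closed (Z : set X) : set (set (set X)) :=
  [set U | betaF U /\ U Z].

Definition betaF_closed (C : set (set (set X))) : Prop :=
  exists B : set (set X), B `<=` ZCcF /\
    C = [set U | betaF U /\ forall Z, B Z -> basic_closed Z U].

Definition betaF_closure (S : set (set (set X))) : set (set (set X)) :=
  [set p | forall C, betaF_closed C -> S `<=` C -> C p].

Definition U_pt (x : X) : set (set X) := [set Z | ZCcF Z /\ Z x].

(* a subset Z of X identified with a subset of beta_o^F X *)
Definition embed (Z : set X) : set (set (set X)) := U_pt @` Z.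

Definition CcF_ideal (M : set (X -> R)) : Prop :=
  [/\ M `<=` CcF, M (fun _ => 0),
      (forall f g, M f -> M g -> M (f \- g)) &
      (forall f g, CcF f -> M g -> M (f \* g))].

Definition CcF_maximal_ideal (M : set (X -> R)) : Prop :=
  [/\ CcF_ideal M, ~ M (fun _ => 1) &
      forall N, CcF_ideal N -> ~ N (fun _ => 1) -> M `<=` N -> N = M].

Definition Zimage (M : set (X -> R)) : set (set X) := Zset @` M.

Definition Mp (p : set (set X)) : set (X -> R) :=
  [set f | CcF f /\ betaF_closure (embed (Zset f)) p].

End CcF.

(* Main.v *)
Set Warnings "-all".
Require Import Defs.
From mathcomp Require Import all_boot all_order all_algebra.
From mathcomp Require Import all_classical all_reals all_analysis.
Import Order.TTheory GRing.Theory Num.Theory.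
Import numFieldNormedType.Exports.
Local Open Scope ring_scope.
Local Open Scope classical_set_scope.

Section Helpers.
Variables (X : topologicalType) (R : realType).
Implicit Types f g : X -> R.

Lemma CcF_op2 (op : R -> R -> R) f g :
  CcF f -> CcF g ->
  (forall x : X, {for x, continuous f} -> {for x, continuous g} ->
     {for x, continuous (fun y => op (f y) (g y))}) ->
  CcF (fun y => op (f y) (g y)).
Proof.
move=> [cf ff] [cg fg] hc; split.
  apply: (sub_countable (B := range f `*` range g)); last exact: countableX.
  apply: card_le_trans; last exact: (card_image_le (fun p => op p.1 p.2)).
  apply: subset_card_le => _ [x _ <-].
  by exists (f x, g x) => //; split; exists x.
apply: (sub_finite_set (B := [set x | ~ {for x, continuous f}] `|`
                              [set x | ~ {for x, continuous g}])).
  move=> x /= nh.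
  have [cfx|ncfx] := pselect ({for x, continuous f}); last by left.
  have [cgx|ncgx] := pselect ({for x, continuous g}); last by right.
  by exfalso; apply: nh; exact: hc.
by rewrite finite_setU.
Qed.

Lemma CcF_cst (c : R) : CcF (fun _ : X => c).
Proof.
split.
  apply: finite_set_countable; apply: (sub_finite_set (B := [set c])).
    by move=> _ [x _ <-].
  exact: finite_set1.
apply: (sub_finite_set (B := set0)); last exact: finite_set0.
by move=> x /= h; apply: h; exact: cvg_cst.
Qed.

Lemma CcF_sub f g : CcF f -> CcF g -> CcF (f \- g).
Proof. by move=> hf hg; apply: (CcF_op2 (fun a b => a - b)) => // x a b; apply: cvgB. Qed.

Lemma CcF_add f g : CcF f -> CcF g -> CcF (f \+ g).
Proof. by move=> hf hg; apply: (CcF_op2 (fun a b => a + b)) => // x a b; apply: cvgD. Qed.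

Lemma CcF_mul f g : CcF f -> CcF g -> CcF (f \* g).
Proof. by move=> hf hg; apply: (CcF_op2 (fun a b => a * b)) => // x a b; apply: cvgM. Qed.

Lemma CcF_inv f : CcF f -> (forall x, f x != 0) -> CcF (fun x => (f x)^-1).
Proof.
move=> [cf ff] nz; split.
  apply: (sub_countable (B := range f)); last exact: cf.
  apply: card_le_trans; last exact: (card_image_le (fun a => a^-1)).
  by apply: subset_card_le => _ [x _ <-]; exists (f x) => //; exists x.
apply: (sub_finite_set (B := [set x | ~ {for x, continuous f}])) => //.
move=> x /= nh cfx; apply: nh.
exact: cvgV.
Qed.


Lemma ZCcFT : @ZCcF X R setT.
Proof.
exists (fun _ => 0); split; first exact: CcF_cst.
by apply/seteqP; split => x //=.
Qed.

Lemma Zset_sq f g :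
  Zset (fun x => f x * f x + g x * g x) = Zset f `&` Zset g.
Proof.
rewrite /Zset; apply/seteqP; split=> x /=.
  move/eqP; rewrite -!expr2 paddr_eq0 ?sqr_ge0 // !sqrf_eq0.
  by case/andP => /eqP -> /eqP ->.
by case=> -> ->; rewrite mulr0 addr0.
Qed.

Lemma ZCcFI (A B : set X) : ZCcF R A -> ZCcF R B -> ZCcF R (A `&` B).
Proof.
move=> [f [hf ->]] [g [hg ->]].
exists (fun x => f x * f x + g x * g x); split; last by rewrite Zset_sq.
by apply: CcF_add; apply: CcF_mul.
Qed.

Lemma ZCcF1 (hT : accessible_space X) (x : X) : ZCcF R [set x].
Proof.
exists (fun y => if y == x then 0 else 1 : R); split; last first.
  rewrite /Zset; apply/seteqP; split=> y /=.
    by move=> ->; rewrite eqxx.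
  move=> h; apply/eqP; apply: contraPT h => /negbTE ->.
  exact/eqP/oner_neq0.
split.
  apply: finite_set_countable; apply: (sub_finite_set (B := [set 0; 1])).
    by move=> _ [y _ <-]; case: (y == x); [left|right].
  exact: finite_set2.
apply: (sub_finite_set (B := [set x])); last exact: finite_set1.
move=> y /= nc; apply: contrapT => yx; apply: nc.
apply: (near_cst_continuous (1 : R)).
have : nbhs y (~` [set x]).
  apply: open_nbhs_nbhs; split => //.
  exact/closed_openC/accessible_closed_set1.
apply: filterS => z /eqP /negbTE ->.
by [].
Qed.

Lemma U_pt_ultra (hT : accessible_space X) (x : X) : ZcF_ultrafilter R (U_pt R x).
Proof.
have filt : ZcF_filter R (U_pt R x).
  split.
  - by exists setT; split => //; exact: ZCcFT.
  - by move=> Z [].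
  - by case.
  - by move=> A B [zA Ax] [zB Bx]; split; [exact: ZCcFI|].
  - by move=> A B [zA Ax] zB AB; split => //; exact: AB.
split => // G [_ GZ G0 GI _] sub.
apply/seteqP; split => // Z GZ'; split; first exact: GZ.
apply: contrapT => nZx; apply: G0.
have -> : set0 = Z `&` [set x].
  by apply/seteqP; split => // y [Zy yx]; apply: nZx; rewrite -yx.
apply: GI => //; apply: sub; split => //; exact: ZCcF1.
Qed.

Lemma closure_embed (hT : accessible_space X) (p : set (set X)) (Z : set X) :
  betaF R p -> ZCcF R Z -> betaF_closure R (embed R Z) p <-> p Z.
Proof.
move=> bp zZ; split.
  move=> /(_ (basic_closed R Z)).
  have cl : betaF_closed R (basic_closed R Z).
    exists [set Z]; split; first by move=> _ ->.
    apply/seteqP; split.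
      by move=> U [bU UZ]; split => // _ ->; split.
    by move=> U [bU /(_ Z erefl) []].
  have sub : embed R Z `<=` basic_closed R Z.
    by move=> _ [x Zx <-]; split; [exact: U_pt_ultra|split].
  by case/(_ cl sub).
move=> pZ C [B [BZ ->]] sub; split => // Z' BZ'; split => //.
case: bp => [[_ _ _ _ up] _].
apply: (up Z) => //; first exact: BZ.
move=> x Zx.
have [_ /(_ Z' BZ') [_ []]] := sub (U_pt R x) (ex_intro2 _ _ x Zx erefl).
by [].
Qed.

Definition Nof (G : set (set X)) : set (X -> R) := [set f | CcF f /\ G (Zset f)].

Lemma Nof_ideal G : ZcF_filter R G -> CcF_ideal (Nof G) /\ ~ Nof G (fun _ => 1).
Proof.
move=> [[A GA] GZ G0 GI up].
have GT : G setT by apply: (up A) => //; exact: ZCcFT.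
split; last first.
  move=> [_]; have -> : Zset (fun _ : X => 1 : R) = set0.
    by apply/seteqP; split => // y /= /eqP; rewrite oner_eq0.
  exact: G0.
split.
- by move=> f [].
- split; first exact: CcF_cst.
  by have -> : Zset (fun _ : X => 0 : R) = setT by apply/seteqP; split.
- move=> f g [cf Gf] [cg Gg]; split; first exact: CcF_sub.
  apply: (up (Zset f `&` Zset g)); first exact: GI.
    by exists (f \- g); split => //; exact: CcF_sub.
  by move=> y [fy gy]; rewrite /Zset /= fy gy subrr.
- move=> f g cf [cg Gg]; split; first exact: CcF_mul.
  apply: (up (Zset g)) => //.
    by exists (f \* g); split => //; exact: CcF_mul.
  by move=> y gy; rewrite /Zset /= gy mulr0.
Qed.

End Helpers.
Arguments Nof {X R}.
Arguments Nof_ideal {X R}.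
Arguments closure_embed {X R}.
Arguments Zset_sq {X R}.
Arguments CcF_inv {X R}.

Theorem theorem4p4 (X : topologicalType) (R : realType) :
  accessible_space X ->
  forall M : set (X -> R), CcF_maximal_ideal M ->
  exists p : set (set X),
    [/\ betaF R p, p = Zimage M & M = Mp p].
Proof.
move=> hT M; rewrite /CcF_maximal_ideal /CcF_ideal => -[] [] MC M0 MB MM M1 Mmax.
have Madd : forall f g, M f -> M g -> M (f \+ g).
  move=> f g Mf Mg.
  have -> : f \+ g = f \- ((fun _ => 0%R) \- g).
    by apply: funext => x /=; rewrite GRing.sub0r GRing.opprK.
  by apply: (MB) => //; apply: (MB).
have filt : ZcF_filter R (Zimage M).
  split.
  - by exists (Zset (fun _ : X => 0%R : R)); exists (fun _ => 0%R).
  - by move=> _ [f Mf <-]; exists f; split => //; exact: (MC).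
  - move=> [f Mf Zf0].
    have nz : forall x, (f x != 0)%R.
      by move=> x; apply/eqP => fx; have : (@set0 X) x by rewrite -Zf0.
    apply: M1.
    have -> : (fun _ : X => 1%R) = (fun x => (f x)^-1)%R \* f.
      by apply: funext => x /=; rewrite GRing.mulVf.
    by apply: (MM) => //; apply: CcF_inv => //; exact: (MC).
  - move=> _ _ [f Mf <-] [g Mg <-].
    exists (fun x => f x * f x + g x * g x)%R; last exact: Zset_sq.
    by apply: Madd; apply: (MM) => //; exact: (MC).
  - move=> _ B [f Mf <-] [g [cg ->]] sub.
    exists (g \* f); first exact: (MM).
    apply/seteqP; split => x; rewrite /Zset /=.
      by move/eqP; rewrite GRing.mulf_eq0 => /orP [/eqP //| /eqP fx]; apply: sub.
    by move=> ->; rewrite GRing.mul0r.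
have NM : forall G, ZcF_filter R G -> Zimage M `<=` G -> Nof G = M.
  move=> G fG sub; have [iN N1] := Nof_ideal G fG.
  apply: Mmax => // f Mf; split; first exact: (MC).
  by apply: sub; exists f.
have ultra : ZcF_ultrafilter R (Zimage M).
  split => // G fG sub.
  apply/seteqP; split => // Z GZ.
  have [_ GZC _ _ _] := fG.
  have [f [cf eZ]] := GZC Z GZ.
  have : Nof G f by split => //; rewrite -eZ.
  by rewrite (NM G fG sub) => Mf; exists f.
have zf : forall f : X -> R, CcF f -> ZCcF R (Zset f) by move=> f cf; exists f.
exists (Zimage M); split => //.
apply/seteqP; split => f.
  move=> Mf; have cf := MC _ Mf; split => //.
  by apply/(closure_embed hT _ _ ultra (zf f cf)); exists f.
move=> [cf /(closure_embed hT _ _ ultra (zf f cf)) pf].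
have : Nof (Zimage M) f by [].
by rewrite (NM _ filt (fun _ x => x)).
Qed.
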